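(* Let $G$ be a torsion-free group, $\mathbb{F}$ a field, $\alpha$ a zero divisor in $\mathbb{F}[G]$ and $\beta$ a mate of $\alpha$. If $|supp(\alpha)|\le 5$, then $\langle h^{-1}supp(\alpha)\rangle=\langle supp(\beta)g^{-1}\rangle$ for all $h\in supp(\alpha)$ and all $g\in supp(\beta)$.
   Context: A zero divisor is a non-zero $\alpha$ with $\alpha\beta'=0$ for some non-zero $\beta'$. A mate of $\alpha$ is a non-zero $\beta\in\mathbb{F}[G]$ with $\alpha\beta=0$ such that $|supp(\beta)|\le|supp(\beta')|$ for every non-zero $\beta'\in\mathbb{F}[G]$ with $\alpha\beta'=0$. Here $supp(\gamma)=\{x\in G:\gamma_x\ne0\}$. *)

(* Defs.v *)
From HB Require Import structures.
From mathcomp Require Import all_boot all_algebra.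
From mathcomp Require Import finmap.
Set Implicit Arguments. Unset Strict Implicit. Unset Printing Implicit Defensive.
Import GRing.Theory.

Local Open Scope fset_scope.

Definition grpalg (G : groupType) (F : fieldType) := {fsfun G -> F with 0%R}.

Definition supp (G : groupType) (F : fieldType) (a : grpalg G F) : {fset G} :=
  finsupp a.

Definition gmul (G : groupType) (F : fieldType) (a b : grpalg G F) (x : G) : F :=
  (\sum_(y <- supp a) a y * b (y^-1 * x)%g)%R.

Definition gnonzero (G : groupType) (F : fieldType) (a : grpalg G F) : Prop :=
  exists x, a x <> 0%R.

Definition gmul_is_zero (G : groupType) (F : fieldType) (a b : grpalg G F) : Prop :=
  forall x, gmul a b x = 0%R.

Definition zero_divisor (G : groupType) (F : fieldType) (a : grpalg G F) : Prop :=
  gnonzero a /\ exists b', gnonzero b' /\ gmul_is_zero a b'.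

Definition mate (G : groupType) (F : fieldType) (a b : grpalg G F) : Prop :=
  gnonzero b /\ gmul_is_zero a b /\
  forall b', gnonzero b' -> gmul_is_zero a b' -> (#|` supp b| <= #|` supp b'|)%N.

Definition torsion_free (G : groupType) : Prop :=
  forall (x : G) (n : nat), (0 < n)%N -> (x ^+ n)%g = 1%g -> x = 1%g.

Definition is_subgroup (G : groupType) (H : G -> Prop) : Prop :=
  H 1%g /\ (forall x y, H x -> H y -> H (x * y)%g) /\ (forall x, H x -> H (x^-1)%g).

Definition gen (G : groupType) (S : G -> Prop) : G -> Prop :=
  fun x => forall H : G -> Prop, is_subgroup H -> (forall s, S s -> H s) -> H x.

Definition lmul_set (G : groupType) (h : G) (A : {fset G}) : G -> Prop :=
  fun x => exists2 y, y \in A & x = (h^-1 * y)%g.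
Definition rmul_set (G : groupType) (A : {fset G}) (g : G) : G -> Prop :=
  fun x => exists2 y, y \in A & x = (y * g^-1)%g.

(* Main.v *)
Require Import Defs.
From mathcomp Require Import all_boot all_algebra.
From mathcomp Require Import finmap.
From Stdlib Require Import ClassicalEpsilon Classical.
Set Implicit Arguments. Unset Strict Implicit. Unset Printing Implicit Defensive.
Import GRing.Theory.
Local Open Scope fset_scope.

Section S.
Variables (G : groupType) (F : fieldType).
Implicit Types a b : grpalg G F.

Lemma in_supp a x : (x \in supp a) = (a x != 0%R).
Proof. by rewrite /supp mem_finsupp. Qed.

Lemma gmul_incl a b S x : supp a `<=` S ->
  gmul a b x = (\sum_(y <- S) a y * b (y^-1 * x)%g)%R.
Proof.
move=> sub; rewrite /gmul; apply: big_fset_incl => // y _.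
by rewrite in_supp negbK => /eqP ->; rewrite mul0r.
Qed.

Definition restr a (P : pred G) : grpalg G F :=
  [fsfun x in supp a => if P x then a x else 0%R].

Lemma restrE a P x : restr a P x = if P x then a x else 0%R.
Proof.
rewrite /restr fsfunE; case: ifP => // /negbT.
by rewrite in_supp negbK => /eqP ->; case: (P x).
Qed.

Lemma in_supp_restr a P x : (x \in supp (restr a P)) = P x && (x \in supp a).
Proof. by rewrite !in_supp restrE; case: (P x) => //=; rewrite eqxx. Qed.

Lemma supp_restr_sub a P : supp (restr a P) `<=` supp a.
Proof. by apply/fsubsetP => y; rewrite in_supp_restr => /andP[]. Qed.

Lemma card_restr a P :
  (#|` supp (restr a P)| + #|` supp (restr a (predC P))| <= #|` supp a|)%N.
Proof.
rewrite -(cardfsID (supp (restr a P)) (supp a)).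
rewrite (fsetIidPr (supp_restr_sub a P)) leq_add2l.
apply: fsubset_leq_card; apply/fsubsetP => y.
rewrite in_supp_restr in_fsetD in_supp_restr /= => /andP[nP ->].
by rewrite (negbTE nP).
Qed.

Lemma gmul_restr a b (P : pred G) :
  gmul_is_zero a b ->
  (forall x, exists c : bool, forall y, y \in supp a ->
      b (y^-1 * x)%g != 0%R -> P y = c) ->
  gmul_is_zero (restr a P) b.
Proof.
move=> ab H x; have [c Hc] := H x.
rewrite (@gmul_incl _ _ (supp a)); last exact: supp_restr_sub.
case: c Hc => Hc.
- rewrite -[RHS](ab x) /gmul; apply: eq_big_seq => y ys; rewrite restrE.
  have [->|nz] := eqVneq (b (y^-1 * x)%g) 0%R; first by rewrite !mulr0.
  by rewrite (Hc y ys nz).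
- apply: big1_seq => y /andP[_ ys]; rewrite restrE.
  have [->|nz] := eqVneq (b (y^-1 * x)%g) 0%R; first by rewrite !mulr0.
  by rewrite (Hc y ys nz) mul0r.
Qed.

Lemma gmul_restr_r a b (P : pred G) :
  gmul_is_zero a b ->
  (forall x, exists c : bool, forall y, y \in supp a -> P (y^-1 * x)%g = c) ->
  gmul_is_zero a (restr b P).
Proof.
move=> ab H x; have [c Hc] := H x.
case: c Hc => Hc.
- rewrite -[RHS](ab x) /gmul; apply: eq_big_seq => y ys; by rewrite restrE Hc.
- apply: big1_seq => y /andP[_ ys]; rewrite restrE Hc //; exact: mulr0.
Qed.

Lemma nosmall a b : torsion_free G -> gnonzero a -> (#|` supp a| <= 2)%N ->
  gnonzero b -> gmul_is_zero a b -> False.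
Proof.
move=> tf [x0 ax0] ca [w0 bw0] ab.
have xs : x0 \in supp a by rewrite in_supp; apply/eqP.
have : (#|` supp a `\ x0| <= 1)%N.
  by move: ca; rewrite cardfsD; move: xs; rewrite -fsub1set => /fsetIidPr ->; rewrite cardfs1; case: (#|` supp a|) => // [[|n]].
case E : #|` supp a `\ x0| => [|[|//]] _.
- have sub : supp a `<=` [fset x0].
    apply/fsubsetP => z zs; rewrite inE; apply/negPn/negP => zx.
    have : z \in supp a `\ x0 by rewrite !inE zx.
    by rewrite (cardfs0_eq E) inE.
  have := ab (x0 * w0)%g; rewrite (gmul_incl _ _ sub) big_seq_fset1 mulKg.
  by move/eqP; rewrite mulf_eq0 => /orP[] /eqP.
- have /cardfs1P [y Ey] : #|` supp a `\ x0| == 1%N by rewrite E.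
  have : y \in supp a `\ x0 by rewrite Ey inE.
  rewrite !inE => /andP [yx ys].
  have sub : supp a `<=` x0 |` [fset y].
    apply/fsubsetP => z zs; rewrite !inE; case: eqP => //= zx.
    have : z \in supp a `\ x0 by rewrite !inE zs andbT; apply/eqP.
    by rewrite Ey inE.
  set t := (y^-1 * x0)%g.
  have step : forall u, b u != 0%R -> b (t * u)%g != 0%R.
    move=> u bu; have := ab (x0 * u)%g.
    rewrite (gmul_incl _ _ sub) big_fsetU1; last by rewrite inE eq_sym.
    rewrite big_seq_fset1 mulKg mulgA -/t => /eqP; rewrite addr_eq0 => /eqP e.
    apply/eqP => tz; move: e; rewrite tz (@mulr0 F (a y)) (@oppr0 F) => /eqP.
    rewrite (@mulf_eq0 F) => /orP[] /eqP //.
    by move=> e; move/eqP: bu.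
  have iter : forall n, b (t ^+ n * w0)%g != 0%R.
    elim => [|n IH]; first by rewrite expg0 mul1g; apply/eqP.
    by rewrite expgS -mulgA; apply: step.
  have inj : injective (fun n => (t ^+ n * w0)%g).
    have key : forall i k, (t ^+ i * w0)%g = (t ^+ (i + k) * w0)%g -> k = 0%N.
      move=> i k /mulIg; rewrite expgnDr -{1}(mulg1 (t ^+ i)%g) => /mulgI e.
      case: k e => // k e; exfalso.
      have t1 := tf t k.+1 isT (esym e).
      have ex : x0 = y by rewrite -(mulVKg y x0); change (y * t = y)%g; rewrite t1 mulg1.
      by move: yx; rewrite ex eqxx.
    move=> i j /= e; case: (leqP i j) => ij.
    + have := key i (j - i); rewrite subnKC // => /(_ e) /eqP.
      by rewrite subn_eq0 => ji; apply/eqP; rewrite eqn_leq ij ji.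
    + have := key j (i - j); rewrite subnKC ?(ltnW ij) // => /(_ (esym e)) h.
      by move: ij; rewrite -subn_gt0 h.
  pose s := [seq (t ^+ n * w0)%g | n <- iota 0 (#|` supp b|).+1].
  have us : uniq s by rewrite map_inj_uniq ?iota_uniq.
  have ss : {subset s <= enum_fset (supp b)}.
    by move=> z /mapP [n _ ->]; rewrite in_supp iter.
  by have := uniq_leq_size us ss; rewrite size_map size_iota ltnn.
Qed.

Lemma gen_sub (S : G -> Prop) : is_subgroup (gen S).
Proof.
split; first by move=> H [H1 _] _.
split; first by move=> x y gx gy H HH HS; case: (HH) => _ [HM _]; apply: HM; [apply: gx | apply: gy].
by move=> x gx H HH HS; case: (HH) => _ [_ HV]; apply: HV; apply: gx.
Qed.

Lemma gen_in (S : G -> Prop) s : S s -> gen S s.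
Proof. by move=> Ss H _ HS; apply: HS. Qed.

Lemma subgroup_mulP (H : G -> Prop) u v : is_subgroup H -> H u -> (H (u * v)%g <-> H v).
Proof.
move=> [_ [HM HV]] Hu; split => Hv; last exact: HM.
by rewrite -(mulKg u v); apply: HM => //; apply: HV.
Qed.

Lemma subgroup_mulrP (H : G -> Prop) u v : is_subgroup H -> H v -> (H (u * v)%g <-> H u).
Proof.
move=> [_ [HM HV]] Hv; split => Hu; last exact: HM.
by rewrite -(mulgK v u); apply: HM => //; apply: HV.
Qed.

Definition pb (P : G -> Prop) : pred G :=
  fun x => if excluded_middle_informative (P x) then true else false.

Lemma pbP (P : G -> Prop) x : pb P x = true <-> P x.
Proof. by rewrite /pb; case: excluded_middle_informative. Qed.

Lemma pb_iff (P : G -> Prop) x y : (P x <-> P y) -> pb P x = pb P y.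
Proof.
move=> e; rewrite /pb.
case: excluded_middle_informative => p1; case: excluded_middle_informative => p2 //.
- by exfalso; apply: p2; apply e.
- by exfalso; apply: p1; apply e.
Qed.

End S.

Theorem mainTheorem6 (G : groupType) (F : fieldType) (a b : grpalg G F) :
  torsion_free G ->
  zero_divisor a ->
  mate a b ->
  (#|` supp a| <= 5)%N ->
  forall h g, h \in supp a -> g \in supp b ->
    forall x, gen (lmul_set h (supp a)) x <-> gen (rmul_set (supp b) g) x.
Proof.
move=> tf [anz _] [bnz [ab bmin]] ca h g hs gs.
set L := gen (lmul_set h (supp a)).
set K := gen (rmul_set (supp b) g).
have LS : is_subgroup L := gen_sub _.
have KS : is_subgroup K := gen_sub _.
have ident : forall y x, (h^-1 * x * g^-1)%g = (h^-1 * y * (y^-1 * x * g^-1))%g.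
  by move=> y x; rewrite !mulgA mulgK.
have part1 : forall y, y \in supp b -> L (y * g^-1)%g.
  pose P := pb (fun w => L (w * g^-1)%g).
  have z : gmul_is_zero a (restr b P).
    apply: gmul_restr_r => // x; exists (P (h^-1 * x)%g) => y ys.
    apply: pb_iff; rewrite /= (ident y x); symmetry.
    by apply: subgroup_mulP => //; apply: gen_in; exists y.
  have nz : gnonzero (restr b P).
    exists g; rewrite restrE; have -> : P g = true.
      by apply/pbP; rewrite mulgV; case: LS.
    by apply/eqP; rewrite -in_supp.
  have := bmin _ nz z => le.
  have e : supp (restr b P) = supp b.
    by apply/eqP; rewrite eqEfcard supp_restr_sub le.
  move=> y ys; apply/(pbP (fun w => L (w * g^-1)%g)).
  by move: ys; rewrite -e in_supp_restr => /andP[].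
have part2 : forall y, y \in supp a -> K (h^-1 * y)%g.
  pose Q := pb (fun y => K (h^-1 * y)%g).
  have hyp : forall c : bool, forall x, exists c', forall y, y \in supp a ->
      b (y^-1 * x)%g != 0%R -> (if c then Q y else ~~ Q y) = c'.
    move=> c x; exists (if c then Q (x * g^-1)%g else ~~ Q (x * g^-1)%g) => y ys bn.
    have -> : Q y = Q (x * g^-1)%g; last by [].
    apply: pb_iff; rewrite mulgA (ident y x).
    symmetry; apply: subgroup_mulrP => //.
    by apply: gen_in; exists (y^-1 * x)%g; rewrite ?in_supp.
  have z1 : gmul_is_zero (restr a Q) b by apply: gmul_restr (hyp true).
  have z2 : gmul_is_zero (restr a (predC Q)) b by apply: gmul_restr (hyp false).
  have n1 : gnonzero (restr a Q).
    exists h; rewrite restrE; have -> : Q h = true.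
      by apply/pbP; rewrite mulVg; case: KS.
    by apply/eqP; rewrite -in_supp.
  move=> y ys; apply: NNPP => Ky.
  have n2 : gnonzero (restr a (predC Q)).
    exists y; rewrite restrE /=; have -> : Q y = false.
      by apply/negP => /pbP.
    by apply/eqP; rewrite -in_supp.
  have := card_restr a Q.
  case: (leqP #|` supp (restr a Q)| 2) => c1.
    by move=> _; apply: (nosmall tf n1 c1 bnz z1).
  case: (leqP #|` supp (restr a (predC Q))| 2) => c2.
    by move=> _; apply: (nosmall tf n2 c2 bnz z2).
  move=> c; have := leq_trans c ca; rewrite leqNgt; move/negP; apply.
  by have := leq_add c1 c2.
move=> x; split.
- move=> Lx; apply: Lx => // s [y ys ->]; exact: part2.
- move=> Kx; apply: Kx => // s [y ys ->]; exact: part1.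
Qed.
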